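(* Let $G$ be a non decreasing function on $[0,\infty)$ and let $X$ be a real random variable with symmetric law. Let $(X_n)_{n\ge1}$ be i.i.d. copies of $X$, $S_n:=X_1+\cdots+X_n$, $L_1:=\sup\big(\{0\}\cup\{n\ge1:\ |S_n/n|\ge1\}\big)$ and $S(X,G,1/8):=\sum_{n\ge1}n^{-1}G(n)\,P[|S_n/n|\ge 1/8]$. Then $$E[G(L_1)]\le G(0)+12\,S(X,G,1/8).$$
   Context: A random variable $X$ has symmetric law if $X$ and $-X$ have the same law. *)

(* Defs.v *)
From HB Require Import structures.
From mathcomp Require Import all_boot all_order all_algebra.
From mathcomp Require Import all_classical all_reals all_analysis.
Set Implicit Arguments. Unset Strict Implicit. Unset Printing Implicit Defensive.
Import Order.TTheory GRing.Theory Num.Theory.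
Local Open Scope classical_set_scope.
Local Open Scope ring_scope.

(* Random variables X n are indexed from 0: X_1, X_2, ... of the paper are
   X 0, X 1, ...; so S_n = X 0 + ... + X (n-1). *)

Definition mutually_independent d (T : measurableType d) (R : realType)
  (P : probability T R) (X : nat -> T -> R) : Prop :=
  forall (I : seq nat) (B : nat -> set R),
    uniq I -> (forall i, i \in I -> measurable (B i)) ->
    P (\bigcap_(i in [set` I]) (X i @^-1` B i)) =
    (\prod_(i <- I) P (X i @^-1` B i))%E.

Definition same_law d (T : measurableType d) (R : realType)
  (P : probability T R) (Y Z : T -> R) : Prop :=
  forall B : set R, measurable B -> P (Y @^-1` B) = P (Z @^-1` B).

Definition symmetric_law d (T : measurableType d) (R : realType)
  (P : probability T R) (Y : T -> R) : Prop :=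
  same_law P Y (fun w => - Y w).

Definition partial_sum T (R : realType) (X : nat -> T -> R) (n : nat) (w : T) : R :=
  \sum_(i < n) X i w.

Definition L1 T (R : realType) (X : nat -> T -> R) (w : T) : \bar R :=
  ereal_sup [set (n%:R)%:E | n in
    [set n : nat | n = 0%N \/ (0 < n)%N /\ 1 <= `|partial_sum X n w / n%:R| ]].

(* extension of G to [0, +oo] by G(+oo) = sup_n G(n) = lim_n G(n)
   (G non-decreasing); the value at -oo is irrelevant (L1 >= 0). *)
Definition Gext (R : realType) (G : R -> R) (x : \bar R) : \bar R :=
  match x with
  | r%:E => (G r)%:E
  | +oo%E => ereal_sup (range (fun n : nat => (G n%:R)%:E))
  | -oo%E => (G 0)%:E
  end.

Definition Ssum d (T : measurableType d) (R : realType)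
  (P : probability T R) (X : nat -> T -> R) (G : R -> R) (eps : R) : \bar R :=
  (\sum_(1 <= n <oo)
     ((n%:R)^-1 * G n%:R)%:E * P [set w | (eps <= `|partial_sum X n w / n%:R|)%R])%E.

(* Main.v *)
Require Import Defs.
From HB Require Import structures.
From mathcomp Require Import all_boot all_order all_algebra.
From mathcomp Require Import all_classical all_reals all_analysis.
From mathcomp Require Import ring lra.
Import Order.TTheory GRing.Theory Num.Theory.
Local Open Scope classical_set_scope.
Local Open Scope ring_scope.

Section Prob.
Context d (T : measurableType d) (R : realType) (P : probability T R).

Definition pr (A : set T) : R := fine (P A).

Lemma prE A : measurable A -> P A = (pr A)%:E.
Proof. by move=> mA; rewrite /pr fineK //; exact: fin_num_measure. Qed.

Lemma pr_ge0 A : 0 <= pr A.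
Proof. by rewrite /pr fine_ge0 // measure_ge0. Qed.

Lemma pr_le1 A : measurable A -> pr A <= 1.
Proof. by move=> mA; rewrite -lee_fin -prE // probability_le1. Qed.

Lemma pr_setT : pr setT = 1.
Proof. by rewrite /pr probability_setT. Qed.

Lemma pr_le A B : measurable A -> measurable B -> A `<=` B -> pr A <= pr B.
Proof.
by move=> mA mB AB; rewrite -lee_fin -!prE //; apply: le_measure => //; rewrite inE.
Qed.

Lemma pr_U A B : measurable A -> measurable B -> A `&` B = set0 ->
  pr (A `|` B) = pr A + pr B.
Proof.
move=> mA mB AB.
have : (pr (A `|` B))%:E = (pr A + pr B)%:E.
  by rewrite EFinD -!prE ?measureU //; exact: measurableU.
by case.
Qed.

Lemma pr_C A : measurable A -> pr (~` A) = 1 - pr A.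
Proof.
move=> mA; have: (pr (~` A))%:E = (1 - pr A)%:E.
  by rewrite -prE ?probability_setC ?prE //; exact: measurableC.
by case.
Qed.

Lemma pr_split A B : measurable A -> measurable B ->
  pr B = pr (B `&` A) + pr (B `&` ~` A).
Proof.
move=> mA mB; rewrite -pr_U; first by rewrite -setIUr setUv setIT.
- exact: measurableI.
- by apply: measurableI => //; exact: measurableC.
- by rewrite setIACA setIid setICr setI0.
Qed.

Lemma indep_ext (G : set (set T)) (B : set T) : measurable B -> setI_closed G ->
  G `<=` measurable -> (forall A, G A -> P (A `&` B) = P A * P B)%E ->
  forall A, <<s G >> A -> P (A `&` B) = (P A * P B)%E.
Proof.
move=> mB GI Gm HG.
have sGm : <<s G >> `<=` measurable.
  by apply: smallest_sub => //; exact: sigma_algebra_measurable.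
apply: (@dynkin_induction _ (g_sigma_algebraType G) G) => //.
- by rewrite setTI probability_setT mul1e.
- move=> S mS0 HS; have mS : @measurable d T S := sGm _ mS0.
  have mCS : @measurable d T (~` S) by apply: measurableC.
  rewrite setIC prE; last exact: measurableI.
  rewrite !prE // in HS *; last exact: measurableI.
  move: HS; rewrite setIC => -[HS]; rewrite -EFinM; congr EFin.
  have h := pr_split _ _ mS mB; rewrite HS in h.
  rewrite pr_C //; nra.
- move=> F mF0 tF HF.
  have mF n : @measurable d T (F n) := sGm _ (mF0 n).
  rewrite setI_bigcupl measure_bigcup //; last first.
    move=> i j _ _ [x [[Fi _] [Fj _]]]; apply: tF => //; by exists x.
    by move=> i _; exact: measurableI.
  rewrite measure_bigcup //.
  rewrite (eq_eseriesr (fun n _ => HF n)).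
  rewrite (prE _ mB) muleC -nneseriesZl; last by move=> *; exact: measure_ge0.
  by apply: eq_eseriesr => i _; rewrite muleC.
Qed.
End Prob.

Section Indep.
Context d (T : measurableType d) (R : realType) (P : probability T R).
Variable Xs : nat -> {RV P >-> R}.
Hypothesis indep : mutually_independent P (fun n => Xs n).

Definition piI (I : seq nat) : set (set T) :=
  [set A | exists B : nat -> set R, (forall i, measurable (B i)) /\
     A = \bigcap_(i in [set` I]) (Xs i @^-1` B i)].

Lemma piI_closed I : setI_closed (piI I).
Proof.
move=> A C [B [mB ->]] [B' [mB' ->]].
exists (fun i => B i `&` B' i); split; first by move=> i; exact: measurableI.
by rewrite -bigcapI.
Qed.

Lemma piI_meas I : piI I `<=` measurable.
Proof.
move=> A [B [mB ->]].
have [->|] := eqVneq [set` I] set0; first by rewrite bigcap_set0.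
move=> /set0P ne; apply: bigcap_measurable => // i _.
by rewrite -[X in measurable X]setTI; apply: measurable_funP.
Qed.

Lemma indep_pi I J : uniq I -> uniq J -> (forall i, i \in I -> i \notin J) ->
  forall A C, piI I A -> piI J C -> P (A `&` C) = (P A * P C)%E.
Proof.
move=> uI uJ IJ A C [B [mB ->]] [B' [mB' ->]].
have IJ' i : i \in J -> i \notin I by apply: contraL => /IJ.
pose D i := if i \in I then B i else B' i.
have mD i : measurable (D i) by rewrite /D; case: ifP.
have -> : \bigcap_(i in [set` I]) (Xs i @^-1` B i) `&`
          \bigcap_(i in [set` J]) (Xs i @^-1` B' i) =
          \bigcap_(i in [set` (I ++ J)]) (Xs i @^-1` D i).
  apply/seteqP; split.
    move=> w [HI HJ] i /=; rewrite mem_cat => /orP[iI|iJ]; rewrite /D.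
      by rewrite iI; exact: HI.
    by rewrite (negbTE (IJ' i iJ)); exact: HJ.
  move=> w H; split=> i /= iI; have := H i; rewrite /= mem_cat iI ?orbT /D => /(_ isT).
    by rewrite iI.
  by rewrite (negbTE (IJ' i iI)).
rewrite (indep (I ++ J) D); last 2 first.
- rewrite cat_uniq uI uJ /= andbT; apply/hasPn => i iJ; exact: IJ'.
- by move=> i _; exact: mD.
rewrite big_cat /=; congr (_ * _)%E.
  rewrite (indep I B) //.
  by apply: eq_big_seq => i iI; rewrite /D iI.
rewrite (indep J B') //.
by apply: eq_big_seq => i iJ; rewrite /D (negbTE (IJ' i iJ)).
Qed.

Lemma gen_meas I : <<s piI I >> `<=` measurable.
Proof. by apply: smallest_sub; [exact: sigma_algebra_measurable|exact: piI_meas]. Qed.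

Lemma indep_block I J : uniq I -> uniq J -> (forall i, i \in I -> i \notin J) ->
  forall A C, <<s piI I >> A -> <<s piI J >> C -> P (A `&` C) = (P A * P C)%E.
Proof.
move=> uI uJ IJ A C sA sC.
have step1 A' : piI I A' -> P (C `&` A') = (P C * P A')%E.
  move=> pA; apply: (@indep_ext _ _ _ P (piI J) A' (@piI_meas I A' pA) (@piI_closed J) (@piI_meas J)) => // C' pC.
  by rewrite setIC muleC; exact: (@indep_pi I J uI uJ IJ A' C' pA pC).
apply: (@indep_ext _ _ _ P (piI I) C (@gen_meas J C sC) (@piI_closed I) (@piI_meas I)) => // A' pA.
by rewrite setIC muleC; exact: step1.
Qed.

Definition TI (I : seq nat) := g_sigma_algebraType (piI I).

Lemma Xs_gmeas I i : i \in I ->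
  @measurable_fun _ _ (TI I) R setT (fun w => Xs i w).
Proof.
move=> iI _ Y mY; rewrite setTI; apply: sub_sigma_algebra.
exists (fun j => if j == i then Y else setT); split.
  by move=> j; case: ifP.
apply/seteqP; split.
  by move=> w Yw j _ /=; case: ifP => // /eqP ->.
by move=> w H; have := H i iI; rewrite /= eqxx.
Qed.

Lemma sum_gmeas I (J : seq nat) : {subset J <= I} ->
  @measurable_fun _ _ (TI I) R setT (fun w => \sum_(i <- J) Xs i w).
Proof.
move=> JI.
pose h i : TI I -> R := if i \in I then (fun w => Xs i w) else (fun _ => 0).
have -> : (fun w => \sum_(i <- J) Xs i w) = (fun w => \sum_(i <- J) h i w).
  apply: funext => w; apply: eq_big_seq => i /JI iI; by rewrite /h iI.
apply: measurable_sum => i; rewrite /h; case: ifP => iI.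
  exact: Xs_gmeas.
exact: measurable_cst.
Qed.

Lemma ev_gmeas I (f : TI I -> R) (Y : set R) :
  @measurable_fun _ _ (TI I) R setT f -> measurable Y -> <<s piI I >> (f @^-1` Y).
Proof. by move=> mf mY; have := mf measurableT Y mY; rewrite setTI. Qed.

Lemma law_ext d2 (T2 : measurableType d2) (G : set (set T2)) (f g : T -> T2) :
  @measurable _ T2 = <<s G >> -> setI_closed G ->
  measurable_fun setT f -> measurable_fun setT g ->
  (forall C, G C -> P (f @^-1` C) = P (g @^-1` C)) ->
  forall C, measurable C -> P (f @^-1` C) = P (g @^-1` C).
Proof.
move=> mG GI mf mg H C mC.
have mpf S : measurable S -> measurable (f @^-1` S).
  by move=> mS; rewrite -[X in measurable X]setTI; exact: mf.
have mpg S : measurable S -> measurable (g @^-1` S).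
  by move=> mS; rewrite -[X in measurable X]setTI; exact: mg.
apply: (@dynkin_induction _ T2 G (fun C => P (f @^-1` C) = P (g @^-1` C)) mG GI) => //.
- move=> S mS HS; rewrite -!preimage_setC (probability_setC P (mpf _ mS)).
  by rewrite (probability_setC P (mpg _ mS)) HS.
- move=> F mF tF HF; rewrite !preimage_bigcup.
  rewrite (measure_bigcup P); [|by move=> i _; exact: mpf|].
    rewrite (measure_bigcup P); [|by move=> i _; exact: mpg|].
      by apply: eq_eseriesr => i _; exact: HF.
    move=> i j _ _ [w [Fi Fj]]; apply: tF => //; by exists (g w).
  move=> i j _ _ [w [Fi Fj]]; apply: tF => //; by exists (f w).
- by rewrite -mG.
Qed.

Definition symm (U : T -> R) := forall C, measurable C ->
  P (U @^-1` C) = P ((fun w => - U w) @^-1` C).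

Lemma sym_add (U V : T -> R) : measurable_fun setT U -> measurable_fun setT V ->
  (forall A B, measurable A -> measurable B ->
     P (U @^-1` A `&` V @^-1` B) = (P (U @^-1` A) * P (V @^-1` B))%E) ->
  symm U -> symm V -> symm (fun w => U w + V w).
Proof.
move=> mU mV iUV sU sV C mC.
pose f w := (U w, V w). pose g w := (- U w, - V w).
have mN A : measurable A -> measurable ((fun x : R => - x) @^-1` A).
  by move=> mA; rewrite -[X in measurable X]setTI; exact: measurable_realfun.oppr_measurable.
have key := @law_ext _ (R * R)%type _ f g (measurable_prod_measurableType _ _).
have mC' : measurable ((fun p : R * R => p.1 + p.2) @^-1` C).
  rewrite -[X in measurable X]setTI.
  by apply: (measurable_realfun.measurable_funD measurable_fst measurable_snd).
have -> : (fun w => - (U w + V w)) @^-1` C = g @^-1` ((fun p : R * R => p.1 + p.2) @^-1` C).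
  by apply/seteqP; split => w /=; rewrite opprD.
have -> : (fun w => U w + V w) @^-1` C = f @^-1` ((fun p : R * R => p.1 + p.2) @^-1` C) by [].
apply: key => //.
- move=> _ _ [A mA [B mB <-]] [A' mA' [B' mB' <-]].
  exists (A `&` A'); first exact: measurableI.
  exists (B `&` B'); first exact: measurableI.
  by rewrite setXI.
- exact: measurable_fun_pair.
- apply: measurable_fun_pair.
    by apply: measurableT_comp => //; exact: measurable_realfun.oppr_measurable.
  by apply: measurableT_comp => //; exact: measurable_realfun.oppr_measurable.
- move=> _ [A mA [B mB <-]].
  have -> : (fun w => (U w, V w)) @^-1` (A `*` B) = U @^-1` A `&` V @^-1` B by [].
  have -> : (fun w => (- U w, - V w)) @^-1` (A `*` B) =
    U @^-1` ((fun x => - x) @^-1` A) `&` V @^-1` ((fun x => - x) @^-1` B) by [].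
  rewrite iUV // iUV; [|exact: mN|exact: mN].
  by rewrite sU // sV.
Qed.

End Indep.


Lemma meas_ge d0 (T0 : measurableType d0) (R : realType) (f : T0 -> R) (c : R) :
  measurable_fun setT f -> measurable [set w | c <= f w].
Proof.
move=> mf; have -> : [set w | c <= f w] = f @^-1` `[c, +oo[.
  by apply/seteqP; split=> w /=; rewrite in_itv /= andbT.
by rewrite -[X in measurable X]setTI; apply: mf => //; exact: measurable_itv.
Qed.

Lemma meas_le d0 (T0 : measurableType d0) (R : realType) (f : T0 -> R) (c : R) :
  measurable_fun setT f -> measurable [set w | f w <= c].
Proof.
move=> mf; have -> : [set w | f w <= c] = f @^-1` `]-oo, c].
  by apply/seteqP; split=> w /=; rewrite in_itv.
by rewrite -[X in measurable X]setTI; apply: mf => //; exact: measurable_itv.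
Qed.

Lemma meas_gt d0 (T0 : measurableType d0) (R : realType) (f : T0 -> R) (c : R) :
  measurable_fun setT f -> measurable [set w | c < f w].
Proof.
move=> mf; have -> : [set w | c < f w] = f @^-1` `]c, +oo[.
  by apply/seteqP; split=> w /=; rewrite in_itv /= andbT.
by rewrite -[X in measurable X]setTI; apply: mf => //; exact: measurable_itv.
Qed.

Lemma meas_lt d0 (T0 : measurableType d0) (R : realType) (f : T0 -> R) (c : R) :
  measurable_fun setT f -> measurable [set w | f w < c].
Proof.
move=> mf; have -> : [set w | f w < c] = f @^-1` `]-oo, c[.
  by apply/seteqP; split=> w /=; rewrite in_itv.
by rewrite -[X in measurable X]setTI; apply: mf => //; exact: measurable_itv.
Qed.

Lemma meas_abs_ge d0 (T0 : measurableType d0) (R : realType) (f : T0 -> R) (c : R) :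
  measurable_fun setT f -> measurable [set w | c <= `|f w|].
Proof.
move=> mf; apply: (@meas_ge _ _ _ (fun w => `|f w|) c).
by apply: measurableT_comp => //; exact: measurable_realfun.normr_measurable.
Qed.

Section Key.
Context d (T : measurableType d) (R : realType) (P : probability T R).
Variable Xs : nat -> {RV P >-> R}.
Hypothesis indep : mutually_independent P (fun n => Xs n).
Hypothesis Xsym : forall i, @symm _ _ _ P (fun w => Xs i w).

Local Notation piJ := (@piI _ _ _ P Xs).
Local Notation TJ := (@TI _ _ _ P Xs).
Local Notation pr := (@pr _ _ _ P).

Lemma Vmeas m n : measurable_fun setT (fun w => \sum_(m <= i < n) Xs i w).
Proof. by apply: measurable_sum => i; exact: measurable_funPT. Qed.

Lemma sym_block m n : @symm _ _ _ P (fun w => \sum_(m <= i < n) Xs i w).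
Proof.
elim: n => [|n IH].
  have -> : (fun w => \sum_(m <= i < 0) Xs i w) = (fun _ => 0).
    by apply: funext => w; rewrite big_geq.
  by move=> C mC; congr (P _); apply/seteqP; split=> w /=; rewrite oppr0.
have [nm|mn] := leqP n.+1 m.
  have -> : (fun w => \sum_(m <= i < n.+1) Xs i w) = (fun _ => 0).
    by apply: funext => w; rewrite big_geq.
  by move=> C mC; congr (P _); apply/seteqP; split=> w /=; rewrite oppr0.
have -> : (fun w => \sum_(m <= i < n.+1) Xs i w) =
          (fun w => \sum_(m <= i < n) Xs i w + Xs n w).
  by apply: funext => w; rewrite big_nat_recr.
apply: sym_add => //.
- exact: Vmeas.
- move=> A B mA mB.
  apply: (@indep_block _ _ _ P Xs indep (index_iota m n) [:: n]).
  + exact: iota_uniq.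
  + by [].
  + by move=> i; rewrite mem_index_iota inE => /andP[_ /ltn_eqF ->].
  + apply: ev_gmeas => //; apply: sum_gmeas => //.
  + apply: ev_gmeas => //; apply: Xs_gmeas; exact: mem_head.
Qed.

Lemma half_block m n : let V := fun w => \sum_(m <= i < n) Xs i w in
  1/2 <= pr [set w | 0 <= V w] /\ 1/2 <= pr [set w | V w <= 0].
Proof.
move=> V; have mV : measurable_fun setT V by exact: Vmeas.
have mA := @meas_ge _ _ _ _ 0 mV; have mB := @meas_le _ _ _ _ 0 mV.
have eq : pr [set w | 0 <= V w] = pr [set w | V w <= 0].
  have := sym_block m n _ (measurable_itv (R:=R) `[0, +oo[).
  have -> : V @^-1` [set` `[0, +oo[] = [set w | 0 <= V w].
    by apply/seteqP; split=> w /=; rewrite in_itv /= andbT.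
  have -> : (fun w => - V w) @^-1` [set` `[0, +oo[] = [set w | V w <= 0].
    by apply/seteqP; split=> w /=; rewrite in_itv /= andbT oppr_ge0.
  by rewrite /pr => ->.
have h := @pr_split _ _ _ P _ _ mA measurableT; rewrite pr_setT !setTI in h.
have : pr (~` [set w | 0 <= V w]) <= pr [set w | V w <= 0].
  apply: pr_le => //; first exact: measurableC.
  by move=> w /= /negP; rewrite -ltNge => /ltW.
lra.
Qed.


Lemma pr_mul A C : P (A `&` C) = (P A * P C)%E -> measurable A -> measurable C ->
  pr (A `&` C) = pr A * pr C.
Proof.
move=> h mA mC; move: h; rewrite !prE //; last exact: measurableI.
by rewrite -EFinM => -[].
Qed.

Lemma key k N c F : (k <= N)%N -> 0 < c -> <<s piJ (index_iota 0 k) >> F ->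
  F `<=` [set w | c <= `|\sum_(0 <= i < k) Xs i w|] ->
  pr F <= 2 * pr (F `&` [set w | c <= `|\sum_(0 <= i < N) Xs i w|]).
Proof.
move=> kN c0 sF FS.
pose Sk := fun w => \sum_(0 <= i < k) Xs i w.
pose V := fun w => \sum_(k <= i < N) Xs i w.
have FS' : forall w, F w -> c <= `|Sk w| := FS.
have SN w : \sum_(0 <= i < N) Xs i w = Sk w + V w by rewrite /Sk /V -big_cat_nat.
pose I := index_iota 0 k; pose J := index_iota k N.
have mSk : @measurable_fun _ _ (TJ I) R setT Sk by exact: sum_gmeas.
have mV : @measurable_fun _ _ (TJ J) R setT V by exact: sum_gmeas.
have gI : <<s piJ I >> `<=` measurable := @gen_meas _ _ _ P Xs I.
have gJ : <<s piJ J >> `<=` measurable := @gen_meas _ _ _ P Xs J.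
have sPos : <<s piJ I >> [set w | 0 < Sk w] := @meas_gt _ (TJ I) _ Sk 0 mSk.
have sFp : <<s piJ I >> (F `&` [set w | 0 < Sk w]).
  exact: (@measurableI _ (TJ I) _ _ sF sPos).
have sFm : <<s piJ I >> (F `&` [set w | Sk w < 0]).
  exact: (@measurableI _ (TJ I) _ _ sF (@meas_lt _ (TJ I) _ Sk 0 mSk)).
have sVp : <<s piJ J >> [set w | 0 <= V w] := @meas_ge _ (TJ J) _ V 0 mV.
have sVm : <<s piJ J >> [set w | V w <= 0] := @meas_le _ (TJ J) _ V 0 mV.
have ind A C : <<s piJ I >> A -> <<s piJ J >> C -> pr (A `&` C) = pr A * pr C.
  move=> sA sC; apply: pr_mul; [|exact: gI|exact: gJ].
  apply: (@indep_block _ _ _ P Xs indep I J (iota_uniq _ _) (iota_uniq _ _)) => //.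
  by move=> i; rewrite !mem_index_iota => /andP[_ ik]; rewrite leqNgt ik.
have [hp hm] := half_block k N.
have hsplit := @pr_split _ _ _ P _ _ (gI _ sPos) (gI _ sF).
have eqC : F `&` ~` [set w | 0 < Sk w] = F `&` [set w | Sk w < 0].
  apply/seteqP; split=> w [Fw h]; split=> //=.
    move/negP: h; rewrite -leNgt => h; rewrite lt_neqAle h andbT.
    by apply/eqP => e; have := FS' w Fw; rewrite e normr0; lra.
  by move=> h'; move: h; rewrite /=; lra.
rewrite eqC in hsplit.
have disj : (F `&` [set w | 0 < Sk w]) `&` [set w | 0 <= V w] `&`
    ((F `&` [set w | Sk w < 0]) `&` [set w | V w <= 0]) = set0.
  by apply/seteqP; split=> // w [[[_ a] _] [[_ b] _]] /=; move: a b => /= a b; lra.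
have hU := @pr_U _ _ _ P _ _ (measurableI _ _ (gI _ sFp) (gJ _ sVp))
                (measurableI _ _ (gI _ sFm) (gJ _ sVm)) disj.
have mAN : measurable [set w | c <= `|\sum_(0 <= i < N) Xs i w|].
  exact: (@meas_abs_ge _ _ _ (fun w => \sum_(0 <= i < N) Xs i w) c (Vmeas 0 N)).
have hle : pr ((F `&` [set w | 0 < Sk w]) `&` [set w | 0 <= V w] `|`
    ((F `&` [set w | Sk w < 0]) `&` [set w | V w <= 0])) <=
    pr (F `&` [set w | c <= `|\sum_(0 <= i < N) Xs i w|]).
  apply: pr_le.
  - apply: measurableU; apply: measurableI.
    + exact: gI.
    + exact: gJ.
    + exact: gI.
    + exact: gJ.
  - by apply: measurableI => //; exact: gI.
  move=> w [[[Fw a] b]|[[Fw a] b]]; split=> //=; rewrite SN; move: a b => /= a b.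
    have := FS' w Fw; rewrite gtr0_norm // => cS.
    by rewrite ger0_norm; lra.
  have := FS' w Fw; rewrite ltr0_norm // => cS.
  by rewrite ler0_norm; lra.
have hFp := ind _ _ sFp sVp; have hFm := ind _ _ sFm sVm.
rewrite hU hFp hFm in hle.
have g1 := @pr_ge0 _ _ _ P (F `&` [set w | 0 < Sk w]).
have g2 := @pr_ge0 _ _ _ P (F `&` [set w | Sk w < 0]).
rewrite hsplit; nra.
Qed.


Fixpoint Mset (a : R) (K : nat) : set T :=
  match K with
  | 0 => set0
  | K'.+1 => Mset a K' `|` [set w | a <= `|\sum_(0 <= i < K'.+1) Xs i w|]
  end.

Lemma Mset_gmeas a K K' : (K <= K')%N -> <<s piJ (index_iota 0 K') >> (Mset a K).
Proof.
elim: K => [|K IH] KK' /=; first exact: (@measurable0 _ (TJ _)).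
apply: (@measurableU _ (TJ _)); first by apply: IH; exact: ltnW.
apply: (@meas_abs_ge _ (TJ _) _ (fun w => \sum_(0 <= i < K.+1) Xs i w)).
apply: sum_gmeas => i; rewrite !mem_index_iota /= => ik.
exact: leq_trans ik KK'.
Qed.

Lemma memM a K w k : (0 < k <= K)%N ->
  a <= `|\sum_(0 <= i < k) Xs i w| -> Mset a K w.
Proof.
elim: K => [|K IH]; first by case/andP => k0; rewrite leqn0 => /eqP k0'; rewrite k0' in k0.
case/andP => k0; rewrite leq_eqVlt => /orP[/eqP ->|kK] h /=; first by right.
by left; apply: IH => //; rewrite k0.
Qed.

Lemma levy a N : 0 < a ->
  pr (Mset a N) <= 2 * pr [set w | a <= `|\sum_(0 <= i < N) Xs i w|].
Proof.
move=> a0.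
pose AN := [set w | a <= `|\sum_(0 <= i < N) Xs i w|].
have mAN : measurable AN.
  exact: (@meas_abs_ge _ _ _ (fun w => \sum_(0 <= i < N) Xs i w) a (Vmeas 0 N)).
have mM K : measurable (Mset a K).
  exact: (@gen_meas _ _ _ P Xs (index_iota 0 K) _ (@Mset_gmeas a K K (leqnn K))).
suff H : forall K, (K <= N)%N -> pr (Mset a K) <= 2 * pr (Mset a K `&` AN).
  have := H N (leqnn N).
  have : pr (Mset a N `&` AN) <= pr AN.
    by apply: pr_le => //; exact: measurableI.
  rewrite /AN; lra.
elim=> [|K IH] KN /=.
  by rewrite set0I /pr measure0 /=; lra.
pose E := [set w | a <= `|\sum_(0 <= i < K.+1) Xs i w|].
have eqU : Mset a K `|` E = Mset a K `|` (E `\` Mset a K).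
  apply/seteqP; split=> w; last by case=> [h|[h _]]; [left|right].
  by case: (pselect (Mset a K w)) => h; [left|case=> // h'; right].
have sE : <<s piJ (index_iota 0 K.+1) >> (E `\` Mset a K).
  apply: (@measurableD _ (TJ _)); last exact: Mset_gmeas.
  apply: (@meas_abs_ge _ (TJ _) _ (fun w => \sum_(0 <= i < K.+1) Xs i w)).
  exact: sum_gmeas.
have mE : measurable (E `\` Mset a K) by exact: (@gen_meas _ _ _ P Xs _ _ sE).
rewrite -/E eqU setIUl.
rewrite (@pr_U _ _ _ P _ _ (mM K) mE); last first.
  by apply/seteqP; split=> // w [h [_ h']].
rewrite (@pr_U _ _ _ P _ _ (measurableI _ _ (mM K) mAN) (measurableI _ _ mE mAN)); last first.
  by apply/seteqP; split=> // w [[h _] [[_ h'] _]].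
have := @key K.+1 N a _ KN a0 sE (fun w h => proj1 h).
have := IH (ltnW KN).
rewrite /AN; lra.
Qed.

Lemma compare N n c : (N <= n)%N -> 0 < c ->
  pr [set w | c <= `|\sum_(0 <= i < N) Xs i w|] <=
  2 * pr [set w | c <= `|\sum_(0 <= i < n) Xs i w|].
Proof.
move=> Nn c0.
have sF : <<s piJ (index_iota 0 N) >> [set w | c <= `|\sum_(0 <= i < N) Xs i w|].
  apply: (@meas_abs_ge _ (TJ _) _ (fun w => \sum_(0 <= i < N) Xs i w)).
  exact: sum_gmeas.
have := @key N n c _ Nn c0 sF (fun w h => h).
have : pr ([set w | c <= `|\sum_(0 <= i < N) Xs i w|] `&`
    [set w | c <= `|\sum_(0 <= i < n) Xs i w|]) <=
    pr [set w | c <= `|\sum_(0 <= i < n) Xs i w|].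
  apply: pr_le; [apply: measurableI| |exact: subIsetr];
  exact: (@meas_abs_ge _ _ _ _ c (Vmeas _ _)).
lra.
Qed.

End Key.


Theorem proposition3 (d : measure_display) (T : measurableType d) (R : realType)
  (P : probability T R) (G : R -> R)
  (G_nondecr : forall x y : R, 0 <= x -> x <= y -> G x <= G y)
  (G_ge0 : forall x : R, 0 <= x -> 0 <= G x)
  (X : {RV P >-> R}) (Xs : nat -> {RV P >-> R})
  (X_sym : symmetric_law P X)
  (Xs_law : forall n, same_law P (Xs n) X)
  (Xs_indep : mutually_independent P (fun n => Xs n)) :
  (\int[P]_w Gext G (L1 (fun n => Xs n) w)
     <= (G 0)%:E + 12%:E * Ssum P (fun n => Xs n) G (1 / 8))%E.
Proof.
have Xsym : forall i, @symm _ _ _ P (fun w => Xs i w).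
  move=> i C mC.
  have mN : measurable ((fun x : R => - x) @^-1` C).
    by rewrite -[X in measurable X]setTI; exact: measurable_realfun.oppr_measurable.
  rewrite (Xs_law i C mC) (X_sym C mC).
  exact: (esym (Xs_law i _ mN)).
have psE n w : partial_sum (fun n => Xs n) n w = \sum_(0 <= i < n) Xs i w.
  by rewrite /partial_sum big_mkord.
pose c j := G (2 ^ j.+1)%:R.
pose M j := @Mset _ _ _ P Xs (2 ^ j)%:R (2 ^ j.+1).
pose H w := ((G 0)%:E + \sum_(0 <= j <oo) (c j * \1_(M j) w)%:E)%E.
have hG0 : 0 <= G 0 by exact: G_ge0.
have hc j : 0 <= c j by apply: G_ge0.
have mM j : measurable (M j).
  exact: (@gen_meas _ _ _ P Xs _ _ (@Mset_gmeas _ _ _ P Xs _ _ _ (leqnn _))).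
have Hge0 w : (0 <= H w)%E.
  apply: adde_ge0; first by rewrite lee_fin.
  by apply: nneseries_ge0 => j _ _; rewrite lee_fin mulr_ge0 // indic_ge0.
have step2 : (\int[P]_w H w = (G 0)%:E + \sum_(0 <= j <oo) (c j)%:E * P (M j))%E.
  rewrite ge0_integralD //.
  - rewrite integral_cst //.
    rewrite [X in ((_ * X) + _)%E](_ : _ = 1%E); last exact: probability_setT.
    rewrite mule1; congr (_ + _)%E.
    rewrite integral_nneseries //.
    + apply: eq_eseriesr => j _.
      rewrite (integralZl_indic _ (fun _ => M j)) //; last first.
        by move=> h; have := hc j; rewrite leNgt h.
      by rewrite integral_indic // setIT.
    + move=> j; apply/measurable_realfun.measurable_EFinP.
      apply: measurable_realfun.measurable_funM => //.
    + by move=> j x _; rewrite lee_fin mulr_ge0 // indic_ge0.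
  - by move=> x _; apply: nneseries_ge0 => j _ _; rewrite lee_fin mulr_ge0 // indic_ge0.
  - have := @ge0_emeasurable_sum _ _ _ setT (fun j x => (c j * \1_(M j) x)%:E) xpredT.
    apply.
    + by move=> j x _ _; rewrite lee_fin mulr_ge0 // indic_ge0.
    + move=> j _; apply/measurable_realfun.measurable_EFinP.
      apply: measurable_realfun.measurable_funM => //.
pose Xf := fun n => Xs n.
pose prP := @pr _ _ _ P.
pose Q n := [set w | 1 / 8 <= `|partial_sum (fun n => Xs n) n w / n%:R|].
pose a n := (((n%:R)^-1 * G n%:R)%:E * P (Q n))%E.
have mQ n : measurable (Q n).
  apply: (@meas_abs_ge _ _ _ (fun w => partial_sum (fun n => Xs n) n w / n%:R)).
  have -> : (fun w => partial_sum (fun n => Xs n) n w / n%:R) =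
            (fun w => (\sum_(0 <= i < n) Xs i w) * (n%:R)^-1).
    by apply: funext => w; rewrite psE.
  apply: measurable_realfun.measurable_funM => //.
  exact: (@Vmeas _ _ _ P Xs 0 n).
have a_ge0 n : (0 <= a n)%E.
  apply: mule_ge0; last exact: measure_ge0.
  by rewrite lee_fin mulr_ge0 // ?invr_ge0 // G_ge0.
pose b j := (\sum_((2 ^ j.+1)%N <= n < (2 ^ j.+2)%N) a n)%E.
have b_ge0 j : (0 <= b j)%E by apply: sume_ge0 => n _; exact: a_ge0.
have hblock j : ((c j)%:E * P (M j) <= 8%:E * b j)%E.
  pose N := (2 ^ j.+1)%N.
  have N0 : (0 < N)%N by rewrite expn_gt0.
  have N0' : 0 < N%:R :> R by rewrite ltr0n.
  have hq n : (N <= n < 2 * N)%N -> prP (M j) <= 4 * prP (Q n).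
    case/andP=> Nn n2N.
    have a0 : 0 < (2 ^ j)%:R :> R by rewrite ltr0n expn_gt0.
    have h1 := @levy _ _ _ P Xs Xs_indep Xsym (2 ^ j)%:R N a0.
    have h2 := @compare _ _ _ P Xs Xs_indep Xsym N n (2 ^ j)%:R Nn a0.
    have h3 : prP [set w | (2 ^ j)%:R <= `|\sum_(0 <= i < n) Xs i w|] <= prP (Q n).
      apply: pr_le => //.
        exact: (@meas_abs_ge _ _ _ _ _ (@Vmeas _ _ _ P Xs 0 n)).
      move=> w /= h; rewrite /Q /= psE normrM normfV.
      have n0 : (0 < n)%N by exact: leq_trans N0 Nn.
      rewrite (@ger0_norm _ n%:R) // ler_pdivlMr ?ltr0n //.
      have : n%:R < 4 * (2 ^ j)%:R :> R.
        have -> : 4 * (2 ^ j)%:R = (2 * N)%:R :> R.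
          by rewrite /N expnS !natrM; ring.
        by rewrite ltr_nat.
      lra.
    rewrite /prP /M -/N; rewrite /prP in h3; lra.
  have hterm n : (N <= n < 2 ^ j.+2)%N ->
      c j * prP (M j) / (8 * N%:R) <= (n%:R)^-1 * G n%:R * prP (Q n).
    case/andP=> Nn n2.
    have n2' : (n < 2 * N)%N by rewrite /N -expnS.
    have hn := hq n (introT andP (conj Nn n2')).
    have cG : c j <= G n%:R.
      by apply: G_nondecr; [exact: ltW|rewrite ler_nat].
    have u0 : 0 < n%:R :> R by rewrite ltr0n (leq_trans N0 Nn).
    have uN : n%:R <= 2 * N%:R :> R.
      by rewrite -natrM ler_nat ltnW.
    have p0 : 0 <= prP (M j) by exact: pr_ge0.
    have q0 : 0 <= prP (Q n) by exact: pr_ge0.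
    have e1 : c j * prP (M j) / (8 * N%:R) =
        (c j * prP (M j) * n%:R) * (8 * N%:R * n%:R)^-1.
      by field; rewrite ?gt_eqF //.
    have e2 : (n%:R)^-1 * G n%:R * prP (Q n) =
        (8 * N%:R * (G n%:R * prP (Q n))) * (8 * N%:R * n%:R)^-1.
      by field; rewrite ?gt_eqF //.
    rewrite e1 e2 ler_pM2r; last by rewrite invr_gt0 !mulr_gt0.
    have h1 : c j * prP (M j) <= G n%:R * (4 * prP (Q n)).
      by apply: ler_pM => //; exact: hc.
    have h2 : c j * prP (M j) * n%:R <= G n%:R * (4 * prP (Q n)) * (2 * N%:R).
      by apply: ler_pM => //; try (apply: mulr_ge0 => //; exact: hc); exact: ltW.
    by apply: (le_trans h2); rewrite le_eqVlt; apply/orP; left; apply/eqP; ring.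
  have := ler_sum_nat hterm; rewrite sumr_const_nat.
  have -> : (2 ^ j.+2 - N = N)%N by rewrite /N expnS mul2n -addnn addnK.
  have e : c j * prP (M j) / (8 * N%:R) *+ N = c j * prP (M j) / 8.
    by rewrite -mulr_natr; field; rewrite gt_eqF.
  rewrite e => hs.
  have ea n : a n = ((n%:R)^-1 * G n%:R * prP (Q n))%:E.
    by rewrite /a (@prE _ _ _ P _ (mQ n)) -EFinM.
  rewrite /b (eq_bigr _ (fun n _ => ea n)) sumEFin (@prE _ _ _ P _ (mM j)) -EFinM.
  rewrite -EFinM lee_fin; rewrite /prP in hs *; lra.
have Sge0 : (0 <= Ssum P (fun n => Xs n) G (1 / 8))%E.
  by apply: nneseries_ge0 => n _ _; exact: a_ge0.
have step3 : (\sum_(0 <= j <oo) (c j)%:E * P (M j) <=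
    8%:E * Ssum P (fun n => Xs n) G (1 / 8))%E.
  apply: (@le_trans _ _ (\sum_(0 <= j <oo) (8%:E * b j))%E).
    apply: lee_nneseries => [j _ _|j _]; last exact: hblock.
    by apply: mule_ge0; [rewrite lee_fin|exact: measure_ge0].
  rewrite nneseriesZl //; apply: lee_wpmul2l => //.
  apply: lime_le; first exact: is_cvg_nneseries.
  apply: nearW => J.
  have eqb : (\sum_(0 <= j < J) b j = \sum_(2 <= n < (2 ^ J.+1)%N) a n)%E.
    elim: J => [|J IH]; first by rewrite !big_geq.
    rewrite big_nat_recr // IH /b -big_cat_nat //.
      by rewrite (leq_trans _ (leq_pexp2l _ (ltn0Sn J))) // expn1.
    by rewrite leq_pexp2l.
  rewrite eqb.
  apply: le_trans (nneseries_lim_ge (2 ^ J.+1)%N _); last by move=> n _ _; exact: a_ge0.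
  rewrite [X in (_ <= X)%E](@big_ltn _ _ _ 1); last first.
    by rewrite (leq_trans _ (leq_pexp2l _ (ltn0Sn J))) // expn1.
  by apply: leeDr; exact: a_ge0.
pose Lset w := [set n : nat | n = 0%N \/
    (0 < n)%N /\ 1 <= `|partial_sum (fun n => Xs n) n w / n%:R|].
have claimA w n : Lset w n -> ((G n%:R)%:E <= H w)%E.
  case=> [->|[n0 h]].
    rewrite mulr0n; apply: leeDl.
    by apply: nneseries_ge0 => j _ _; rewrite lee_fin mulr_ge0 // indic_ge0.
  have /andP[lo hi] := trunc_log_bounds (isT : (1 < 2)%N) n0.
  set j := trunc_log 2 n in lo hi.
  have hS : n%:R <= `|\sum_(0 <= i < n) Xs i w|.
    move: h; rewrite psE normrM normfV (@ger0_norm _ n%:R) // ler_pdivlMr ?ltr0n //.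
    by rewrite mul1r.
  have Mj : M j w.
    apply: (@memM _ _ _ P Xs _ _ w n); first by rewrite n0 ltnW.
    by apply: le_trans hS; rewrite ler_nat.
  have Gc : G n%:R <= c j by apply: G_nondecr => //; rewrite ler_nat ltnW.
  apply: (@le_trans _ _ (c j)%:E); first by rewrite lee_fin.
  apply: (@le_trans _ _ (\sum_(0 <= i <oo) (c i * \1_(M i) w)%:E)%E); last first.
    by apply: leeDr; rewrite lee_fin.
  apply: le_trans (nneseries_lim_ge j.+1 _); last first.
    by move=> i _ _; rewrite lee_fin mulr_ge0 // indic_ge0.
  rewrite big_nat_recr //= indicE mem_set // mulr1.
  apply: leeDr; apply: sume_ge0 => i _.
  by rewrite lee_fin mulr_ge0 // indic_ge0.
have claimB w : (Gext G (L1 (fun n => Xs n) w) <= H w)%E.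
  rewrite /L1 -/(Lset w).
  set S := [set (n%:R)%:E | n in Lset w].
  have S0 : S 0%:E by exists 0%N; [left|].
  case E: (ereal_sup S) => [r| |] /=.
  - have : ((r - 1)%:E < ereal_sup S)%E by rewrite E lte_fin; lra.
    case/ereal_sup_gt => _ [n Ln <-] hn.
    have nr : ((n%:R)%:E <= ereal_sup S)%E by apply: ereal_sup_ubound; exists n.
    have rn : (ereal_sup S <= (n%:R)%:E)%E.
      apply: ge_ereal_sup => _ [m Lm <-].
      have : ((m%:R)%:E <= ereal_sup S)%E by apply: ereal_sup_ubound; exists m.
      rewrite E lee_fin lte_fin in hn * => mr.
      by rewrite lee_fin ler_nat -ltnS -(ltr_nat R) -addn1 natrD; lra.
    have -> : r = n%:R.
      by apply/eqP; rewrite eq_le -!lee_fin -E nr rn.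
    exact: claimA.
  - apply: ge_ereal_sup => _ [m _ <-].
    have : ((m%:R)%:E < ereal_sup S)%E by rewrite E ltry.
    case/ereal_sup_gt => _ [n Ln <-]; rewrite lte_fin ltr_nat => mn.
    apply: le_trans (claimA w n Ln); rewrite lee_fin.
    by apply: G_nondecr => //; rewrite ler_nat ltnW.
  - by have := claimA w 0%N (or_introl erefl); rewrite mulr0n.
have Gext_ge0 w : (0 <= Gext G (L1 (fun n => Xs n) w))%E.
  rewrite /L1; set S := [set (n%:R)%:E | n in _].
  have S0 : S 0%:E by exists 0%N; [left|].
  have := ereal_sup_ubound S0.
  case: (ereal_sup S) => [r| |] //= h.
  - by rewrite lee_fin; apply: G_ge0; rewrite -lee_fin.
  - apply: (@le_trans _ _ (G 0%:R)%:E); first by rewrite mulr0n lee_fin.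
    by apply: ereal_sup_ubound; exists 0%N.
have step1 : (\int[P]_w Gext G (L1 (fun n => Xs n) w) <= \int[P]_w H w)%E.
  rewrite !ge0_integralTE //.
  apply: ereal_sup_le => _ [h hh <-]; exists h => //= x.
  exact: le_trans (hh x) (claimB x).
apply: (le_trans step1); rewrite step2 leeD2l //.
apply: (le_trans step3); apply: lee_wpmul2r => //.
by have h : (8 : R) <= 12 by lra.
Qed.
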